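(* If a \textsc{2-Visits} instance has a feasible schedule, then it has a feasible schedule in which (1) all secondary visits are placed in gaps (equivalently, no primary visit is placed in a gap), and (2) the secondary visits appear in the schedule in order of non-decreasing induced deadlines.
   Context: \textsc{2-Visits} (primary/secondary formulation): given a non-decreasing sequence of $n$ positive integers $d_1\le\dots\le d_n$, decide whether there exists a schedule of length $2n$ (each position $1,\dots,2n$ holds one visit) containing one primary and one secondary visit of each node $i\in[n]$, such that the primary visit of $i$ is at position at most $d_i$, and the secondary visit of $i$ is either before its primary visit or at most $d_i$ positions after its primary visit. Such a schedule is feasible. The discretized sequence $A=\langle a_1,\dots,a_n\rangle$ is defined by $a_n=d_n$ and $a_i=\min\{a_{i+1}-1,d_i\}$ for $i<n$. A position $p\in[2n]$ is a gap if $p\notin\{a_1,\dots,a_n\}$. If the primary visit of node $i$ is at position $t_i$, its induced deadline is $d_i'=d_i+t_i$. Standing assumptions: all entries of $A$ are positive and all deadlines satisfy $d_i\le 2n$ (so there are exactly $n$ gaps in $[2n]$). *)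

(* Defs.v *)
From mathcomp Require Import all_boot.
Set Implicit Arguments. Unset Strict Implicit. Unset Printing Implicit Defensive.

(* Conventions: nodes are 0-indexed, i < n (paper's node i+1);
   d : nat -> nat gives the deadlines d_1..d_n as d 0 .. d (n-1);
   positions are 1-based, 1..2n, as in the paper.
   A schedule is given by t i (position of the primary visit of i) and
   s i (position of the secondary visit of i). *)

Definition instance (n : nat) (d : nat -> nat) : Prop :=
  (forall i, i < n -> 0 < d i) /\
  (forall i j, i <= j -> j < n -> d i <= d j).

Definition schedule (n : nat) (t s : nat -> nat) : Prop :=
  (forall i, i < n -> 1 <= t i <= 2 * n) /\
  (forall i, i < n -> 1 <= s i <= 2 * n) /\
  (forall i j, i < n -> j < n -> t i <> s j) /\
  (forall i j, i < n -> j < n -> t i = t j -> i = j) /\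
  (forall i j, i < n -> j < n -> s i = s j -> i = j).

Definition feasible (n : nat) (d : nat -> nat) (t s : nat -> nat) : Prop :=
  schedule n t s /\
  forall i, i < n ->
    t i <= d i /\ (s i < t i \/ s i <= t i + d i).

(* discr d n k = a_{n-1-k} (0-indexed): a_{n-1} = d_{n-1},
   a_i = min(a_{i+1} - 1, d_i). *)
Fixpoint discr (d : nat -> nat) (n k : nat) : nat :=
  match k with
  | 0 => d n.-1
  | k'.+1 => minn (discr d n k' - 1) (d (n.-1 - k'.+1))
  end.

Definition disc (d : nat -> nat) (n i : nat) : nat := discr d n (n.-1 - i).

Definition gap (d : nat -> nat) (n p : nat) : bool :=
  (1 <= p <= 2 * n) && (p \notin [seq disc d n i | i <- iota 0 n]).

Definition induced (d t : nat -> nat) (i : nat) : nat := d i + t i.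

(* Main.v *)
Require Import Defs.
From mathcomp Require Import all_boot zify.
From Stdlib Require Import Classical.
Set Implicit Arguments. Unset Strict Implicit.

Definition feas2 n d t s := schedule n t s /\
  forall i, i < n -> t i <= d i /\ s i <= t i + d i.

Lemma feasE n d t s : feasible n d t s <-> feas2 n d t s.
Proof.
split=> [[Hs H]|[Hs H]]; split=> // i Hi; have [H1 H2] := H i Hi; split=> //.
  by case: H2 => H2 //; lia.
by right.
Qed.

Lemma disc_last d n : disc d n n.-1 = d n.-1.
Proof. by rewrite /disc subnn. Qed.

Lemma disc_rec d n m : m.+1 < n -> disc d n m = minn (disc d n m.+1 - 1) (d m).
Proof.
move=> Hm; rewrite /disc.
have -> : n.-1 - m = (n.-1 - m.+1).+1 by lia.
rewrite [LHS]/=.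
by have -> : n.-1 - (n.-1 - m.+1).+1 = m by lia.
Qed.

Lemma disc_le_d d n m : m < n -> disc d n m <= d m.
Proof.
move=> Hm; case: (ltnP m.+1 n) => H.
  by rewrite disc_rec // geq_minr.
have -> : m = n.-1 by lia.
by rewrite disc_last.
Qed.

Lemma disc_lt d n m : (forall i, i < n -> 0 < disc d n i) -> m.+1 < n -> disc d n m < disc d n m.+1.
Proof.
move=> Hp Hm; rewrite disc_rec //; have := Hp _ Hm.
have := geq_minl (disc d n m.+1 - 1) (d m); lia.
Qed.

Lemma disc_mono d n m m' : (forall i, i < n -> 0 < disc d n i) -> m < m' -> m' < n -> disc d n m < disc d n m'.
Proof.
move=> Hp; elim: m' => [//|m' IH] Hmm' Hn.
have H1 := disc_lt Hp Hn.
case: (ltngtP m m') => H.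
- by apply: ltn_trans (IH H _) H1; lia.
- lia.
- by rewrite H.
Qed.

Lemma count_ge m n : count (fun i => m <= i) (iota 0 n) = n - m.
Proof.
elim: n => [|n IH] //.
rewrite -addn1 iotaD count_cat IH /= add0n addn0.
by case: leqP => H /=; lia.
Qed.

Lemma sub_count_in (T : eqType) (a1 a2 : pred T) s :
  (forall x, x \in s -> a1 x -> a2 x) -> count a1 s <= count a2 s.
Proof.
elim: s => [//|x s IH] H /=.
apply: leq_add; last by apply: IH => y Hy; apply: H; rewrite inE Hy orbT.
case E: (a1 x) => //=; by rewrite (H x) // inE eqxx.
Qed.

Lemma countL n d t : instance n d -> (forall i, i < n -> 0 < disc d n i) ->
  (forall i j, i < n -> j < n -> t i = t j -> i = j) ->
  (forall i, i < n -> t i <= d i) ->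
  forall m, m < n -> count (fun y => disc d n m < y) (map t (iota 0 n)) <= n.-1 - m.
Proof.
move=> [Hpos Hmono] Hdpos Hinj Htd.
have Tuniq : uniq (map t (iota 0 n)).
  rewrite map_inj_in_uniq ?iota_uniq // => i j.
  rewrite !mem_iota !add0n => /andP[_ Hi] /andP[_ Hj]; exact: Hinj.
suff H : forall r m, n.-1 - m = r -> m < n ->
    count (fun y => disc d n m < y) (map t (iota 0 n)) <= r.
  by move=> m Hm; apply: (H _ m).
elim=> [|r IH] m Hr Hm.
- have Em : m = n.-1 by lia.
  rewrite leqn0 eqn0Ngt -has_count; apply/hasPn => y /mapP [i].
  rewrite mem_iota add0n => /andP[_ Hi] ->.
  rewrite -leqNgt Em disc_last. apply: leq_trans (Htd i Hi) _. apply: Hmono; lia.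
- have Hm1 : m.+1 < n by lia.
  have IH' := IH m.+1 ltac:(lia) Hm1.
  have Hp1 := Hdpos _ Hm1.
  rewrite (disc_rec _ Hm1).
  case: (leqP (disc d n m.+1 - 1) (d m)) => Hc.
  + idtac.
    apply: leq_trans (sub_count (a2 := predU (fun y => disc d n m.+1 < y) (pred1 (disc d n m.+1))) _ _) _.
      move=> y /= Hy; case: (ltngtP (disc d n m.+1) y) => H //=; lia.
    rewrite -(leq_add2r (count (predI (fun y => disc d n m.+1 < y) (pred1 (disc d n m.+1))) (map t (iota 0 n)))).
    rewrite count_predUI.
    have := count_uniq_mem (disc d n m.+1) Tuniq.
    have := leq_b1 (disc d n m.+1 \in map t (iota 0 n)).
    rewrite /=. lia.
  + rewrite count_map.
    apply: leq_trans (sub_count_in (a2 := fun i => m.+1 <= i) _) _.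
      move=> i; rewrite mem_iota add0n => /andP[_ Hi] /= H.
      rewrite ltnNge; apply/negP => Him.
      have := Hmono _ _ Him Hm; have := Htd i Hi; lia.
    rewrite count_ge; lia.
Qed.

Lemma sum_lt1 n (f g : nat -> nat) h : h < n -> (forall i, i < n -> f i <= g i) -> f h < g h ->
  \sum_(i < n) f i < \sum_(i < n) g i.
Proof.
move=> Hh Hle Hlt.
rewrite (bigD1 (Ordinal Hh)) //= [X in _ < X](bigD1 (Ordinal Hh)) //=.
apply: leq_trans (_ : g h + \sum_(i < n | i != Ordinal Hh) f i <= _).
  by rewrite ltn_add2r.
by rewrite leq_add2l; apply: leq_sum => i _; apply Hle.
Qed.

Lemma sum2E n (F : nat -> nat) i j (Hi : i < n) (Hj : j < n) : i != j ->
  \sum_(k < n) F k = F i + F j + \sum_(k < n | (k != Ordinal Hi) && (k != Ordinal Hj)) F k.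
Proof.
move=> Hij.
rewrite (bigD1 (Ordinal Hi)) //= -addnA; congr (_ + _).
by rewrite (@bigD1 _ _ _ _ (Ordinal Hj) (fun k => k != Ordinal Hi)) //= eq_sym.
Qed.

Lemma sum_lt2 n (f g : nat -> nat) i j : i < n -> j < n -> i != j ->
  (forall k, k < n -> k != i -> k != j -> f k = g k) -> f i + f j < g i + g j ->
  \sum_(k < n) f k < \sum_(k < n) g k.
Proof.
move=> Hi Hj Hij Heq Hlt.
rewrite (sum2E f Hi Hj Hij) (sum2E g Hi Hj Hij).
rewrite (eq_bigr (fun k : 'I_n => g k)); last first.
  move=> k /andP[Hki Hkj]; apply: Heq; [exact: ltn_ord | exact: Hki | exact: Hkj].
by rewrite ltn_add2r.
Qed.

Lemma sum_bound n (f : nat -> nat) B : (forall i, i < n -> f i <= B) -> \sum_(i < n) f i <= n * B.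
Proof.
elim: n => [|n IH] H; first by rewrite big_ord0.
rewrite big_ord_recr /= mulSn addnC; apply: leq_add; first exact: H.
by apply: IH => i Hi; apply: H; lia.
Qed.

Lemma step1 n d t s : instance n d -> (forall i, i < n -> 0 < disc d n i) ->
  (forall i, i < n -> d i <= 2 * n) ->
  feas2 n d t s -> forall k, k < n -> (forall i, i < n -> t i <> disc d n k) ->
  exists t' s', feas2 n d t' s' /\ \sum_(i < n) t i < \sum_(i < n) t' i.
Proof.
move=> Hinst Hdpos Hd2n [[Ht [Hs [Hts [Htinj Hsinj]]]] Hf] k Hk Hnk.
have [h [Hkh [Hhn Hth]]] : exists h, k <= h /\ h < n /\ t h < disc d n k.
  apply: NNPP => Hno.
  have HL := countL Hinst Hdpos Htinj (fun i Hi => (Hf i Hi).1) Hk.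
  rewrite count_map in HL.
  have : count (fun i => k <= i) (iota 0 n) <= count (fun i => disc d n k < t i) (iota 0 n).
    apply: sub_count_in => i; rewrite mem_iota add0n => /andP[_ Hi] /= Hki.
    case: (ltngtP (disc d n k) (t i)) => // H.
      by exfalso; apply: Hno; exists i.
    by exfalso; apply: (Hnk i Hi).
  rewrite count_ge => H; have := leq_trans H HL; lia.
have Hdk := disc_le_d d Hk.
have Hdh : disc d n k <= d h by apply: leq_trans Hdk (Hinst.2 _ _ Hkh Hhn).
have Hdk1 := Hdpos _ Hk.
have Hdk2 := Hd2n _ Hk.
pose t' := fun x => if x == h then disc d n k else t x.
have Hsum : \sum_(i < n) t i < \sum_(i < n) t' i.
  apply: (sum_lt1 Hhn) => [i Hi|]; rewrite /t' ?eqxx //.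
  by case: eqP => [->|]; [apply: ltnW|].
case: (classic (exists j, j < n /\ s j = disc d n k)) => [[j [Hjn Hsj]]|Hnoj].
- pose s' := fun x => if x == j then t h else s x.
  exists t', s'; split=> //; split; [split; [|split; [|split; [|split]]]|].
  + move=> i Hi; rewrite /t'; case: eqP => _; [lia|exact: Ht].
  + move=> i Hi; rewrite /s'; case: eqP => _; [exact: Ht|exact: Hs].
  + move=> i i' Hi Hi'; rewrite /t' /s'.
    case: (eqVneq i h) => [Eih|Hih]; case: (eqVneq i' j) => [Eij|Hij].
    * lia.
    * move=> E; move/eqP: Hij; apply; apply: Hsinj => //; congruence.
    * move=> E; move/eqP: Hih; apply; exact: Htinj.
    * exact: Hts.
  + move=> i i' Hi Hi'; rewrite /t'.
    case: (eqVneq i h) => [Eih|Hih]; case: (eqVneq i' h) => [Ei'h|Hi'h] E.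
    * congruence.
    * by exfalso; apply: (Hnk i' Hi'); rewrite E.
    * by exfalso; apply: (Hnk i Hi).
    * exact: Htinj.
  + move=> i i' Hi Hi'; rewrite /s'.
    case: (eqVneq i j) => [Eij|Hij]; case: (eqVneq i' j) => [Ei'j|Hi'j] E.
    * congruence.
    * by exfalso; apply: (Hts h i' Hhn Hi'); rewrite E.
    * by exfalso; apply: (Hts h i Hhn Hi); rewrite E.
    * exact: Hsinj.
  + move=> i Hi; have [H1 H2] := Hf i Hi; rewrite /t' /s'.
    case: (eqVneq i h) => [Eih|Hih]; case: (eqVneq i j) => [Eij|Hij]; split; try lia.
    * subst i; lia.
    * subst i; lia.
    * subst i; lia.
    * subst i; move: H2; rewrite Hsj; lia.
- exists t', s; split=> //; split; [split; [|split; [|split; [|split]]]|] => //.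
  + move=> i Hi; rewrite /t'; case: eqP => _; [lia|exact: Ht].
  + move=> i i' Hi Hi'; rewrite /t'.
    case: (eqVneq i h) => [Eih|Hih] E.
    * by apply: Hnoj; exists i'.
    * exact: (Hts i i' Hi Hi' E).
  + move=> i i' Hi Hi'; rewrite /t'.
    case: (eqVneq i h) => [Eih|Hih]; case: (eqVneq i' h) => [Ei'h|Hi'h] E.
    * congruence.
    * by exfalso; apply: (Hnk i' Hi'); rewrite E.
    * by exfalso; apply: (Hnk i Hi).
    * exact: Htinj.
  + move=> i Hi; have [H1 H2] := Hf i Hi; rewrite /t'.
    case: (eqVneq i h) => [Eih|Hih]; split; try lia.
    all: subst i; lia.
Qed.

Lemma phase1 n d : instance n d -> (forall i, i < n -> 0 < disc d n i) ->
  (forall i, i < n -> d i <= 2 * n) ->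
  forall m t s, feas2 n d t s -> n * (2 * n) - \sum_(i < n) t i <= m ->
  exists t' s', feas2 n d t' s' /\ forall k, k < n -> exists i, i < n /\ t' i = disc d n k.
Proof.
move=> Hinst Hdpos Hd2n; elim=> [|m IH] t s Hfs Hm;
  (case: (classic (exists k, k < n /\ forall i, i < n -> t i <> disc d n k)) => [[k [Hk Hnk]]|Hall];
  [|exists t, s; split=> // k Hk; apply: NNPP => Hno; apply: Hall; exists k; split=> // i Hi E;
    by apply: Hno; exists i]);
  have [t' [s' [Hf' Hsum]]] := step1 Hinst Hdpos Hd2n Hfs Hk Hnk;
  have Hb : \sum_(i < n) t' i <= n * (2 * n)
    by apply: sum_bound => i Hi; case: Hf' => [[Ht _] _]; have := Ht i Hi; lia.
- lia.
- apply: (IH t' s') => //; lia.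
Qed.

Definition meas n (d t s : nat -> nat) : nat := \sum_(i < n) s i * (d i + t i).

Lemma step2 n d t s : feas2 n d t s -> forall i j, i < n -> j < n -> s i < s j -> d j + t j < d i + t i ->
  exists s', feas2 n d t s' /\ (forall x, x < n -> exists y, y < n /\ s' x = s y) /\
    meas n d t s < meas n d t s'.
Proof.
move=> [[Ht [Hs [Hts [Htinj Hsinj]]]] Hf] i j Hi Hj Hsij HD.
have Hij : i != j by apply/eqP => E; subst; lia.
pose s' := fun x => if x == i then s j else if x == j then s i else s x.
have Hs'r : forall x, x < n -> exists y, y < n /\ s' x = s y.
  move=> x Hx; rewrite /s'; case: eqP => _; first by exists j.
  by case: eqP => _; [exists i|exists x].
pose sig := fun x => if x == i then j else if x == j then i else x.
have Es' : forall x, s' x = s (sig x).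
  by move=> x; rewrite /s' /sig; case: eqP => //; case: eqP.
have Hsig : forall x, x < n -> sig x < n.
  by move=> x Hx; rewrite /sig; case: eqP => //; case: eqP.
have Hji : (j == i) = false by rewrite eq_sym (negbTE Hij).
have Hinv : forall x, sig (sig x) = x.
  move=> x; rewrite /sig.
  case: (eqVneq x i) => [->|Hxi]; first by rewrite ?eqxx ?Hji.
  case: (eqVneq x j) => [->|Hxj]; first by rewrite ?Hji ?eqxx ?Hji.
  by rewrite (negbTE Hxi) (negbTE Hxj).
exists s'; split; last split=> //.
- split; [split; [|split; [|split; [|split]]]|].
  + exact: Ht.
  + by move=> x Hx; have [y [Hy ->]] := Hs'r x Hx; exact: Hs.
  + by move=> x y Hx Hy; have [z [Hz ->]] := Hs'r y Hy; exact: Hts.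
  + exact: Htinj.
  + move=> x y Hx Hy; rewrite !Es' => E.
    have Hsx := Hsig x Hx; have Hsy := Hsig y Hy.
    have E' := Hsinj _ _ Hsx Hsy E.
    by rewrite -(Hinv x) -(Hinv y) E'.
  + move=> x Hx; have [H1 H2] := Hf x Hx; split=> //; rewrite /s'.
    case: (eqVneq x i) => [Exi|Hxi]; first by subst; have := (Hf j Hj).2; lia.
    case: (eqVneq x j) => [Exj|Hxj]; first by subst; have := (Hf j Hj).2; lia.
    done.
- rewrite /meas; apply: (sum_lt2 (f := fun k => s k * (d k + t k)) (g := fun k => s' k * (d k + t k)) Hi Hj Hij).
    by move=> k Hk Hki Hkj; rewrite /s' (negbTE Hki) (negbTE Hkj).
  rewrite /s' /= ?eqxx ?Hji ?eqxx.
  nia.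
Qed.

Lemma phase2 n d t : (forall i, i < n -> d i <= 2 * n) ->
  forall m s, feas2 n d t s -> (forall i, i < n -> gap d n (s i)) ->
  n * (2 * n * (4 * n)) - meas n d t s <= m ->
  exists s', feas2 n d t s' /\ (forall i, i < n -> gap d n (s' i)) /\
    (forall i j, i < n -> j < n -> s' i < s' j -> induced d t i <= induced d t j).
Proof.
move=> Hd2n; elim=> [|m IH] s Hfs Hg Hm;
  (case: (classic (exists i j, i < n /\ j < n /\ s i < s j /\ d j + t j < d i + t i))
     => [[i [j [Hi [Hj [Hsij HD]]]]]|Hno];
  [|exists s; split=> //; split=> // i j Hi Hj Hsij; rewrite /induced leqNgt; apply/negP => HD;
    by apply: Hno; exists i, j]);
  have [s' [Hf' [Hr Hlt]]] := step2 Hfs Hi Hj Hsij HD;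
  (have Hg' : forall x, x < n -> gap d n (s' x)
    by move=> x Hx; have [y [Hy ->]] := Hr x Hx; exact: Hg);
  (have Hb : meas n d t s' <= n * (2 * n * (4 * n))
    by rewrite /meas; apply: (sum_bound (f := fun x => s' x * (d x + t x))) => x Hx; case: Hf' => [[Ht [Hs _]] Hf];
       have := Ht x Hx; have := Hs x Hx; have := Hd2n x Hx; move=> H1 H2 H3;
       apply: leq_mul; lia).
- lia.
- apply: (IH s') => //; lia.
Qed.

Unset Implicit Arguments.

Theorem theorem1 (n : nat) (d : nat -> nat) :
  instance n d ->
  (forall i, i < n -> 0 < disc d n i) ->
  (forall i, i < n -> d i <= 2 * n) ->
  (exists t s, feasible n d t s) ->
  exists t s, feasible n d t s /\
    (forall i, i < n -> gap d n (s i)) /\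
    (forall i, i < n -> ~~ gap d n (t i)) /\
    (forall i j, i < n -> j < n -> s i < s j ->
       induced d t i <= induced d t j).
Proof.
move=> Hinst Hdpos Hd2n [t [s /feasE Hfs]].
have [t1 [s1 [Hf1 Hocc]]] := phase1 Hinst Hdpos Hd2n Hfs (leq_subr _ _).
have Hf1' := Hf1.
case: Hf1' => [[Ht [Hs [Hts [Htinj Hsinj]]]] Hf].
have Hgs : forall i, i < n -> gap d n (s1 i).
  move=> i Hi; rewrite /gap; apply/andP; split; first exact: Hs.
  apply/mapP => [[k]]; rewrite mem_iota add0n => /andP[_ Hk] E.
  have [i' [Hi' Et]] := Hocc k Hk.
  by apply: (Hts i' i Hi' Hi); rewrite Et E.
have Hgt : forall i, i < n -> ~~ gap d n (t1 i).
  move=> i Hi; rewrite /gap negb_and; apply/orP; right; rewrite negbK.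
  have Auniq : uniq [seq disc d n k | k <- iota 0 n].
    rewrite map_inj_in_uniq ?iota_uniq // => k k'.
    rewrite !mem_iota !add0n => /andP[_ Hk] /andP[_ Hk'] E.
    case: (ltngtP k k') => // H.
    - by have := disc_mono Hdpos H Hk'; rewrite E ltnn.
    - by have := disc_mono Hdpos H Hk; rewrite E ltnn.
  have Hsub : {subset [seq disc d n k | k <- iota 0 n] <= [seq t1 k | k <- iota 0 n]}.
    move=> y /mapP [k]; rewrite mem_iota add0n => /andP[_ Hk] ->.
    have [i' [Hi' Et]] := Hocc k Hk.
    by rewrite -Et; apply: map_f; rewrite mem_iota add0n.
  have [_ Heq] := uniq_min_size Auniq Hsub ltac:(by rewrite !size_map).
  by rewrite Heq; apply: map_f; rewrite mem_iota add0n.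
have [s2 [Hf2 [Hg2 Hsort]]] :=
  phase2 Hd2n Hf1 Hgs (leq_subr _ _).
exists t1, s2; split; first by apply/feasE.
by split=> //; split.
Qed.
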